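(* Let all notions be as in the context. (1) If $(\Gamma,\mathsf{eval}\ e,S)\Longrightarrow^{*}(\Delta,\mathsf{eval}\ w,S)$ is a balanced evaluation (with $w$ a weak head normal form), then $\Gamma;\mathrm{upd}(S);e\Downarrow\Delta;w$. (2) If $(\Gamma,\mathsf{match}\ A\ m,S)\Longrightarrow^{*}(\Delta,\mathsf{match}\ [\,]\ r,S)$ is a balanced evaluation (with $r$ a matching result), then $\Gamma;\mathrm{upd}(S);A;m\Downarrow_M\Delta;r$.
   Context: The language $\lambda_{\mathrm{PMC}}$ (in normalized form). Expressions: $e ::= x \mid e\,y \mid \lambda m \mid c(y_1,\ldots,y_n)$, where $x,y,y_i$ are variables, $c$ ranges over constructors, and application arguments and constructor arguments are variables. Matchings: $m ::= \mathsf{ret}(e) \mid \mathsf{fail} \mid p \Rightarrow m \mid y \triangleright m \mid m_1 \mid m_2 \mid (m\ \mathsf{where}\ \{x_1=e_1;\ldots;x_n=e_n\})$ (return expression, failure, pattern match, argument supply, alternative, local possibly recursive bindings). Patterns: $p ::= x \mid c(p_1,\ldots,p_n)$ (patterns may be nested). The matching $y_1 \triangleright p_1 \Rightarrow \cdots \Rightarrow y_n \triangleright p_n \Rightarrow m$ associates to the right: $y_1 \triangleright (p_1 \Rightarrow (y_2 \triangleright (\cdots (p_n \Rightarrow m)\cdots)))$. $m[y/x]$ denotes capture-avoiding substitution of $y$ for free occurrences of $x$. Arity: $\mathrm{ar}(\mathsf{ret}(e))=0$, $\mathrm{ar}(\mathsf{fail})=0$, $\mathrm{ar}(p\Rightarrow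 m)=1+\mathrm{ar}(m)$, $\mathrm{ar}(y\triangleright m)=\max(0,\mathrm{ar}(m)-1)$, $\mathrm{ar}(m_1\mid m_2)=\mathrm{ar}(m_1)$ if $\mathrm{ar}(m_1)=\mathrm{ar}(m_2)$ (undefined otherwise), $\mathrm{ar}(m\ \mathsf{where}\ b)=\mathrm{ar}(m)$. Weak head normal forms: $w ::= \lambda m$ with $\mathrm{ar}(m)>0$, or $c(y_1,\ldots,y_n)$. Matching results: $r ::= \mathsf{ret}(e) \mid \mathsf{fail}$. A heap $\Gamma,\Delta,\Theta$ is a finite map from variables to expressions; $\Gamma[y\mapsto e]$ maps $y$ to $e$ and otherwise agrees with $\Gamma$. An argument stack $A$ is a list of variables; for such a list define $[\,]\triangleright e = e$ and $(y:ys)\triangleright e = ys \triangleright (e\,y)$. $L$ is a set of variables. Big-step semantics: two mutually inductive judgments $\Gamma;L;e \Downarrow \Delta;w$ and $\Gamma;L;A;m \Downarrow_M \Delta;r$ defined by the rules: (Whnf) $\Gamma;L;w \Downarrow \Gamma;w$. (Sat) if $\mathrm{ar}(m)=0$, $\Gamma;L;[\,];m \Downarrow_M \Delta;\mathsf{ret}(e)$ and $\Delta;L;e\Downarrow\Theta;w$, then $\Gamma;L;\lambda m \Downarrow \Theta;w$. (Var) if $\Gamma;L\cup\{y\};e \Downarrow \Delta;w$ then $\Gamma[y\mapsto e];L;y \Downarrow \Delta[y\mapsto w];w$. (App) if $\Gamma;L;e\Downarrow\Delta;\lambda m$ and $\Delta;L;\lambda(y\triangleright m)\Downarrow\Theta;w$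 then $\Gamma;L;(e\,y)\Downarrow\Theta;w$. (Return) $\Gamma;L;A;\mathsf{ret}(e)\Downarrow_M\Gamma;\mathsf{ret}(A\triangleright e)$. (Fail) $\Gamma;L;A;\mathsf{fail}\Downarrow_M\Gamma;\mathsf{fail}$. (Arg) if $\Gamma;L;(y:A);m\Downarrow_M\Delta;r$ then $\Gamma;L;A;y\triangleright m\Downarrow_M\Delta;r$. (Bind) if $\Gamma;L;A;m[y/x]\Downarrow_M\Delta;r$ then $\Gamma;L;(y:A);x\Rightarrow m\Downarrow_M\Delta;r$. (Cons1) if $\Gamma;L;y\Downarrow\Delta;c(y_1,\ldots,y_n)$ and $\Delta;L;A;y_1\triangleright p_1\Rightarrow\cdots\Rightarrow y_n\triangleright p_n\Rightarrow m\Downarrow_M\Theta;r$ then $\Gamma;L;(y:A);c(p_1,\ldots,p_n)\Rightarrow m\Downarrow_M\Theta;r$. (Cons2) if $\Gamma;L;y\Downarrow\Delta;c'(y_1,\ldots,y_k)$ with $c\neq c'$ then $\Gamma;L;(y:A);c(p_1,\ldots,p_n)\Rightarrow m\Downarrow_M\Delta;\mathsf{fail}$. (Alt1) if $\Gamma;L;A;m_1\Downarrow_M\Delta;\mathsf{ret}(e)$ then $\Gamma;L;A;(m_1\mid m_2)\Downarrow_M\Delta;\mathsf{ret}(e)$. (Alt2) if $\Gamma;L;A;m_1\Downarrow_M\Delta;\mathsf{fail}$ and $\Delta;L;A;m_2\Downarrow_M\Theta;r$ then $\Gamma;L;A;(m_1\mid m_2)\Downarrow_M\Theta;r$. (Where)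 if $\Gamma[y_i\mapsto\hat e_i];L;A;\hat m\Downarrow_M\Delta;r$ then $\Gamma;L;A;(m\ \mathsf{where}\ \{x_i=e_i\})\Downarrow_M\Delta;r$, where the $y_i$ are fresh (occur neither free nor bound in $\Gamma$, $L$, $A$, or $m$), $\hat e_i=e_i[y_1/x_1,\ldots,y_n/x_n]$ and $\hat m=m[y_1/x_1,\ldots,y_n/x_n]$. Abstract machine. Controls: $C ::= \mathsf{eval}\ e \mid \mathsf{match}\ A\ m$. Continuations: $k ::= y \mid\ !y \mid \$ \mid ?(A,m) \mid @(A, c(\vec p)\Rightarrow m)$. A return stack $S$ is a list of continuations. Configurations are triples $(\Gamma, C, S)$. Transitions $\Longrightarrow$: (App1) $(\Gamma,\mathsf{eval}\ (e\,y),S)\Longrightarrow(\Gamma,\mathsf{eval}\ e,y:S)$. (App2) $(\Gamma,\mathsf{eval}\ \lambda m,y:S)\Longrightarrow(\Gamma,\mathsf{eval}\ \lambda(y\triangleright m),S)$ if $\mathrm{ar}(m)>0$. (Sat) $(\Gamma,\mathsf{eval}\ \lambda m,S)\Longrightarrow(\Gamma,\mathsf{match}\ [\,]\ m,\$:S)$ if $\mathrm{ar}(m)=0$. (Var) $(\Gamma[y\mapsto e],\mathsf{eval}\ y,S)\Longrightarrow(\Gamma,\mathsf{eval}\ e,!y:S)$. (Update) $(\Gamma,\mathsf{eval}\ w,!y:S)\Longrightarrow(\Gamma[y\mapsto w],\mathsf{eval}\ w,S)$. (Return1A) $(\Gamma,\mathsf{match}\ A\ \mathsf{ret}(e),S)\Longrightarrow(\Gamma,\mathsf{match}\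 [\,]\ \mathsf{ret}(A\triangleright e),S)$ if $A\neq[\,]$. (Return1B) $(\Gamma,\mathsf{match}\ [\,]\ \mathsf{ret}(e),\$:S)\Longrightarrow(\Gamma,\mathsf{eval}\ e,S)$. (Return2) $(\Gamma,\mathsf{match}\ [\,]\ \mathsf{ret}(e),?(A',m):S)\Longrightarrow(\Gamma,\mathsf{match}\ [\,]\ \mathsf{ret}(e),S)$. (Bind) $(\Gamma,\mathsf{match}\ (y:A)\ (x\Rightarrow m),S)\Longrightarrow(\Gamma,\mathsf{match}\ A\ m[y/x],S)$. (Cons1) $(\Gamma,\mathsf{match}\ (y:A)\ (c(\vec p)\Rightarrow m),S)\Longrightarrow(\Gamma,\mathsf{eval}\ y,@(A,c(\vec p)\Rightarrow m):S)$. (Cons2) $(\Gamma,\mathsf{eval}\ c(y_1,\ldots,y_n),@(A,c(p_1,\ldots,p_n)\Rightarrow m):S)\Longrightarrow(\Gamma,\mathsf{match}\ A\ (y_1\triangleright p_1\Rightarrow\cdots\Rightarrow y_n\triangleright p_n\Rightarrow m),S)$. (Fail) $(\Gamma,\mathsf{eval}\ c'(y_1,\ldots,y_k),@(A,c(p_1,\ldots,p_n)\Rightarrow m):S)\Longrightarrow(\Gamma,\mathsf{match}\ [\,]\ \mathsf{fail},S)$ if $c\neq c'$. (Arg) $(\Gamma,\mathsf{match}\ A\ (y\triangleright m),S)\Longrightarrow(\Gamma,\mathsf{match}\ (y:A)\ m,S)$. (Alt1) $(\Gamma,\mathsf{match}\ A\ (m_1\mid m_2),S)\Longrightarrow(\Gamma,\mathsf{match}\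 A\ m_1,?(A,m_2):S)$. (Alt2) $(\Gamma,\mathsf{match}\ A'\ \mathsf{fail},?(A,m):S)\Longrightarrow(\Gamma,\mathsf{match}\ A\ m,S)$. (Where) $(\Gamma,\mathsf{match}\ A\ (m\ \mathsf{where}\ \{x_i=e_i\}),S)\Longrightarrow(\Gamma[y_i\mapsto\hat e_i],\mathsf{match}\ A\ \hat m,S)$ with $y_i$ fresh, $\hat e_i=e_i[y_1/x_1,\ldots,y_n/x_n]$, $\hat m=m[y_1/x_1,\ldots,y_n/x_n]$. $\Longrightarrow^{*}$ is the reflexive–transitive closure of $\Longrightarrow$. A sequence of transitions $(\Gamma,C,S)\Longrightarrow^{*}(\Delta,C',S)$ is balanced if the initial and final return stacks are identical and every intermediate return stack has the form $k_1:k_2:\cdots:k_n:S$ (an extension of the initial stack). For a return stack $S$, $\mathrm{upd}(S)=\{y : (!y)\in S\}$ is the set of variables marked for update in $S$. *)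

(* Defs.v *)
From Stdlib Require Import List Arith PeanoNat.
Import ListNotations.

Definition var := nat.
Definition con := nat.

Inductive pat : Type :=
| PVar (x : var)
| PCon (c : con) (ps : list pat).

Inductive expr : Type :=
| EVar (x : var)
| EApp (e : expr) (y : var)
| ELam (m : matching)
| ECon (c : con) (ys : list var)
with matching : Type :=
| MRet (e : expr)
| MFail
| MPat (p : pat) (m : matching)
| MArg (y : var) (m : matching)
| MAlt (m1 m2 : matching)
| MWhere (m : matching) (b : list (var * expr)).

Inductive result : Type := RRet (e : expr) | RFail.
Definition of_result (r : result) : matching :=
  match r with RRet e => MRet e | RFail => MFail end.

Fixpoint pvars (p : pat) : list var :=
  match p with
  | PVar x => [x]
  | PCon _ ps => flat_map pvars ps
  end.

Fixpoint vars_e (e : expr) : list var :=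
  match e with
  | EVar x => [x]
  | EApp e y => y :: vars_e e
  | ELam m => vars_m m
  | ECon _ ys => ys
  end
with vars_m (m : matching) : list var :=
  match m with
  | MRet e => vars_e e
  | MFail => []
  | MPat p m => pvars p ++ vars_m m
  | MArg y m => y :: vars_m m
  | MAlt m1 m2 => vars_m m1 ++ vars_m m2
  | MWhere m b =>
      vars_m m ++ flat_map (fun xe => match xe with (x, e) => x :: vars_e e end) b
  end.

(** Capture-avoiding simultaneous renaming.  Every binder is renamed to a
    name strictly larger than the image under the renaming of every variable
    occurring in its scope, so no capture can happen. *)
Fixpoint idx (x : var) (l : list var) : option nat :=
  match l with
  | [] => None
  | y :: l' => if Nat.eqb x y then Some 0
               else match idx x l' with Some i => Some (S i) | None => None end
  end.

Definition extend (s : var -> var) (xs : list var) (base : nat) (v : var) : var :=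
  match idx v xs with Some i => base + i | None => s v end.

Definition fresh_base (s : var -> var) (l : list var) : nat :=
  S (fold_right (fun v acc => Nat.max (s v) acc) 0 l).

Fixpoint ren_p (s : var -> var) (p : pat) : pat :=
  match p with
  | PVar x => PVar (s x)
  | PCon c ps => PCon c (map (ren_p s) ps)
  end.

Fixpoint ren_e (s : var -> var) (e : expr) : expr :=
  match e with
  | EVar x => EVar (s x)
  | EApp e y => EApp (ren_e s e) (s y)
  | ELam m => ELam (ren_m s m)
  | ECon c ys => ECon c (map s ys)
  end
with ren_m (s : var -> var) (m : matching) : matching :=
  match m with
  | MRet e => MRet (ren_e s e)
  | MFail => MFail
  | MPat p m' =>
      let s' := extend s (pvars p) (fresh_base s (vars_m (MPat p m'))) in
      MPat (ren_p s' p) (ren_m s' m')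
  | MArg y m' => MArg (s y) (ren_m s m')
  | MAlt m1 m2 => MAlt (ren_m s m1) (ren_m s m2)
  | MWhere m' b =>
      let s' := extend s (map fst b) (fresh_base s (vars_m (MWhere m' b))) in
      MWhere (ren_m s' m')
             (map (fun xe => match xe with (x, e) => (s' x, ren_e s' e) end) b)
  end.

Definition sim_ren (ys xs : list var) (v : var) : var :=
  match idx v xs with Some i => nth i ys v | None => v end.

Definition subst_m (y x : var) (m : matching) : matching :=
  ren_m (fun v => if Nat.eqb v x then y else v) m.

(** Arity (None = undefined). *)
Fixpoint ar (m : matching) : option nat :=
  match m with
  | MRet _ => Some 0
  | MFail => Some 0
  | MPat _ m => option_map S (ar m)
  | MArg _ m => option_map (fun k => k - 1) (ar m)
  | MAlt m1 m2 =>
      match ar m1, ar m2 with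
      | Some a, Some b => if Nat.eqb a b then Some a else None
      | _, _ => None
      end
  | MWhere m _ => ar m
  end.

Definition is_whnf (e : expr) : Prop :=
  match e with
  | ELam m => exists k, ar m = Some (S k)
  | ECon _ _ => True
  | _ => False
  end.

Definition heap := var -> option expr.
Definition finite_heap (H : heap) : Prop :=
  exists N, forall v, N <= v -> H v = None.
Definition hupd (H : heap) (y : var) (e : expr) : heap :=
  fun v => if Nat.eqb v y then Some e else H v.
Definition hupds (H : heap) (ys : list var) (es : list expr) : heap :=
  fold_right (fun ye H' => hupd H' (fst ye) (snd ye)) H (combine ys es).

Definition app_args (A : list var) (e : expr) : expr :=
  fold_left (fun e y => EApp e y) A e.

Fixpoint chain (ys : list var) (ps : list pat) (m : matching) : matching :=
  match ys, ps with
  | y :: ys', p :: ps' => MArg y (MPat p (chain ys' ps' m))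
  | _, _ => m
  end.

Definition fresh_heap (y : var) (H : heap) : Prop :=
  forall z e, H z = Some e -> z <> y /\ ~ In y (vars_e e).

(** Big-step semantics.  L is a set of variables represented as a list
    (only membership is observed; L u {y} is y :: L). *)
Inductive bs : heap -> list var -> expr -> heap -> expr -> Prop :=
| BS_Whnf G L w :
    is_whnf w -> bs G L w G w
| BS_Sat G L m D e T w :
    ar m = Some 0 -> bsm G L [] m D (RRet e) -> bs D L e T w ->
    bs G L (ELam m) T w
| BS_Var G L y e D w :
    bs G (y :: L) e D w -> bs (hupd G y e) L (EVar y) (hupd D y w) w
| BS_App G L e y D m T w :
    bs G L e D (ELam m) -> bs D L (ELam (MArg y m)) T w ->
    bs G L (EApp e y) T w
with bsm : heap -> list var -> list var -> matching -> heap -> result -> Prop :=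
| BSM_Return G L A e :
    bsm G L A (MRet e) G (RRet (app_args A e))
| BSM_Fail G L A :
    bsm G L A MFail G RFail
| BSM_Arg G L A y m D r :
    bsm G L (y :: A) m D r -> bsm G L A (MArg y m) D r
| BSM_Bind G L y A x m D r :
    bsm G L A (subst_m y x m) D r -> bsm G L (y :: A) (MPat (PVar x) m) D r
| BSM_Cons1 G L y A c ps m D ys T r :
    length ys = length ps ->
    bs G L (EVar y) D (ECon c ys) ->
    bsm D L A (chain ys ps m) T r ->
    bsm G L (y :: A) (MPat (PCon c ps) m) T r
| BSM_Cons2 G L y A c ps m D c' ys :
    c <> c' ->
    bs G L (EVar y) D (ECon c' ys) ->
    bsm G L (y :: A) (MPat (PCon c ps) m) D RFail
| BSM_Alt1 G L A m1 m2 D e :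
    bsm G L A m1 D (RRet e) -> bsm G L A (MAlt m1 m2) D (RRet e)
| BSM_Alt2 G L A m1 m2 D T r :
    bsm G L A m1 D RFail -> bsm D L A m2 T r -> bsm G L A (MAlt m1 m2) T r
| BSM_Where G L A m b ys D r :
    length ys = length b -> NoDup ys ->
    (forall y, In y ys ->
       fresh_heap y G /\ ~ In y L /\ ~ In y A /\ ~ In y (vars_m (MWhere m b))) ->
    bsm (hupds G ys (map (fun xe => ren_e (sim_ren ys (map fst b)) (snd xe)) b))
        L A (ren_m (sim_ren ys (map fst b)) m) D r ->
    bsm G L A (MWhere m b) D r.

Inductive control : Type :=
| CEval (e : expr)
| CMatch (A : list var) (m : matching).

Inductive cont : Type :=
| KArg (y : var)
| KUpd (y : var)                                      (* !y *)
| KSat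
| KAlt (A : list var) (m : matching)
| KCons (A : list var) (c : con) (ps : list pat) (m : matching).

Definition stack := list cont.
Definition config : Type := (heap * control * stack)%type.

Definition vars_k (k : cont) : list var :=
  match k with
  | KArg y => [y]
  | KUpd y => [y]
  | KSat => []
  | KAlt A m => A ++ vars_m m
  | KCons A c ps m => A ++ vars_m (MPat (PCon c ps) m)
  end.

Definition vars_stack (St : stack) : list var := flat_map vars_k St.

Fixpoint upd (St : stack) : list var :=
  match St with
  | [] => []
  | KUpd y :: St' => y :: upd St'
  | _ :: St' => upd St'
  end.

Inductive step : config -> config -> Prop :=
| ST_App1 G e y St :
    step (G, CEval (EApp e y), St) (G, CEval e, KArg y :: St)
| ST_App2 G m y St k :
    ar m = Some (Datatypes.S k) ->
    step (G, CEval (ELam m), KArg y :: St) (G, CEval (ELam (MArg y m)), St)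
| ST_Sat G m St :
    ar m = Some 0 ->
    step (G, CEval (ELam m), St) (G, CMatch [] m, KSat :: St)
| ST_Var G y e St :
    step (hupd G y e, CEval (EVar y), St) (G, CEval e, KUpd y :: St)
| ST_Update G w y St :
    is_whnf w ->
    step (G, CEval w, KUpd y :: St) (hupd G y w, CEval w, St)
| ST_Return1A G A e St :
    A <> [] ->
    step (G, CMatch A (MRet e), St) (G, CMatch [] (MRet (app_args A e)), St)
| ST_Return1B G e St :
    step (G, CMatch [] (MRet e), KSat :: St) (G, CEval e, St)
| ST_Return2 G e A' m St :
    step (G, CMatch [] (MRet e), KAlt A' m :: St) (G, CMatch [] (MRet e), St)
| ST_Bind G y A x m St :
    step (G, CMatch (y :: A) (MPat (PVar x) m), St) (G, CMatch A (subst_m y x m), St)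
| ST_Cons1 G y A c ps m St :
    step (G, CMatch (y :: A) (MPat (PCon c ps) m), St)
         (G, CEval (EVar y), KCons A c ps m :: St)
| ST_Cons2 G c ys A ps m St :
    length ys = length ps ->
    step (G, CEval (ECon c ys), KCons A c ps m :: St) (G, CMatch A (chain ys ps m), St)
| ST_Fail G c' ys A c ps m St :
    c <> c' ->
    step (G, CEval (ECon c' ys), KCons A c ps m :: St) (G, CMatch [] MFail, St)
| ST_Arg G A y m St :
    step (G, CMatch A (MArg y m), St) (G, CMatch (y :: A) m, St)
| ST_Alt1 G A m1 m2 St :
    step (G, CMatch A (MAlt m1 m2), St) (G, CMatch A m1, KAlt A m2 :: St)
| ST_Alt2 G A' A m St :
    step (G, CMatch A' MFail, KAlt A m :: St) (G, CMatch A m, St)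
| ST_Where G A m b ys St :
    length ys = length b -> NoDup ys ->
    (forall y, In y ys ->
       fresh_heap y G /\ ~ In y A /\ ~ In y (vars_m (MWhere m b)) /\
       ~ In y (vars_stack St)) ->
    step (G, CMatch A (MWhere m b), St)
         (hupds G ys (map (fun xe => ren_e (sim_ren ys (map fst b)) (snd xe)) b),
          CMatch A (ren_m (sim_ren ys (map fst b)) m), St).

Definition extends (St : stack) (St' : stack) : Prop := exists ks, St' = ks ++ St.

Definition cstack (c : config) : stack := match c with (_, _, St) => St end.

Inductive steps_above (St : stack) : config -> config -> Prop :=
| SA_refl c : extends St (cstack c) -> steps_above St c c
| SA_step c c' c'' :
    extends St (cstack c) -> step c c' -> steps_above St c' c'' ->
    steps_above St c c''.

Definition balanced (G : heap) (C : control) (St : stack) (D : heap) (C' : control) : Prop :=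
  steps_above St (G, C, St) (D, C', St).

(* Main.v *)
Require Import Defs.
From Stdlib Require Import List Arith Lia Wf_nat.
Import ListNotations.

Inductive sa (St : stack) : nat -> config -> config -> Prop :=
| sa_refl c : extends St (cstack c) -> sa St 0 c c
| sa_step n c c' c'' : extends St (cstack c) -> step c c' -> sa St n c' c'' ->
    sa St (Datatypes.S n) c c''.

Lemma to_sa St c c' : steps_above St c c' -> exists n, sa St n c c'.
Proof. induction 1 as [|c c' c'' He Hs _ [n Hn]]; eauto using sa. Qed.

Lemma sa_ext St n c c' : sa St n c c' -> extends St (cstack c).
Proof. destruct 1; auto. Qed.

Lemma ext_pop x St : extends (x :: St) St -> False.
Proof. intros [ks H]. apply (f_equal (@length cont)) in H.
  rewrite length_app in H; simpl in H; lia. Qed.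

Lemma step_stack c c' : step c c' ->
  cstack c' = cstack c \/ (exists x, cstack c' = x :: cstack c) \/
  (exists x, cstack c = x :: cstack c').
Proof. intros H; inversion H; subst; simpl;
  first [left; reflexivity | right; left; eexists; reflexivity
        | right; right; eexists; reflexivity]. Qed.

Lemma split_sa k St n c c'' : sa St n c c'' -> extends (k::St) (cstack c) ->
  cstack c'' = St ->
  exists n1 n2 c1 c2, sa (k::St) n1 c c1 /\ cstack c1 = k::St /\ step c1 c2 /\
    cstack c2 = St /\ sa St n2 c2 c'' /\ n = n1 + Datatypes.S n2.
Proof.
  induction 1 as [c He | n c c' c'' He Hs Hr IH]; intros Hk Hc.
  - exfalso. destruct Hk as [ks Hks]. rewrite Hc in Hks.
    apply (f_equal (@length cont)) in Hks; rewrite length_app in Hks; simpl in Hks; lia.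
  - destruct Hk as [ks Hks].
    destruct (step_stack _ _ Hs) as [E|[[x E]|[x E]]].
    + destruct IH as (n1&n2&c1&c2&A1&A2&A3&A4&A5&A6); [exists ks; congruence|auto|].
      exists (Datatypes.S n1), n2, c1, c2; repeat split; auto.
      econstructor; eauto. exists ks; auto. lia.
    + destruct IH as (n1&n2&c1&c2&A1&A2&A3&A4&A5&A6); [exists (x::ks); rewrite E, Hks; auto|auto|].
      exists (Datatypes.S n1), n2, c1, c2; repeat split; auto.
      econstructor; eauto. exists ks; auto. lia.
    + rewrite Hks in E. destruct ks as [|x' ks']; simpl in E.
      * injection E as E1 E2.
        exists 0, n, c, c'; split; [constructor; exists []; exact Hks|].
        split; [exact Hks|]. split; [exact Hs|]. split; [symmetry; exact E2|].
        split; [exact Hr|lia].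
      * injection E as E1 E2.
        destruct IH as (n1&n2&c1&c2&A1&A2&A3&A4&A5&A6); [exists ks'; auto|auto|].
        exists (Datatypes.S n1), n2, c1, c2; repeat split; auto.
        econstructor; eauto. exists (x'::ks'); auto. lia.

Qed.

Lemma stuck_eval H w St c' : is_whnf w -> step (H, CEval w, St) c' -> extends St (cstack c') -> False.
Proof.
  intros Hw Hs He; inversion Hs; subst; simpl in *; try contradiction;
  try (eapply ext_pop; exact He).
  destruct Hw; congruence.
Qed.

Lemma stuck_match H A r St c' : (A = [] \/ r = RFail) ->
  step (H, CMatch A (of_result r), St) c' -> extends St (cstack c') -> False.
Proof.
  intros HA Hs He; destruct r; simpl in Hs; inversion Hs; subst; simpl in *;
  try (eapply ext_pop; exact He).
  destruct HA; congruence.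
Qed.

Lemma sa_stuck_eval H w St n c'' : is_whnf w -> sa St n (H, CEval w, St) c'' ->
  c'' = (H, CEval w, St).
Proof.
  intros Hw Hs; inversion Hs; subst; auto.
  exfalso; eapply stuck_eval; eauto using sa_ext.
Qed.

Lemma sa_stuck_match H A r St n c'' : (A = [] \/ r = RFail) ->
  sa St n (H, CMatch A (of_result r), St) c'' -> c'' = (H, CMatch A (of_result r), St).
Proof.
  intros HA Hs; inversion Hs; subst; auto.
  exfalso; eapply stuck_match; eauto using sa_ext.
Qed.

Lemma upd_vars y St : In y (upd St) -> In y (vars_stack St).
Proof.
  induction St as [|k St IH]; simpl; auto.
  destruct k; simpl; intros; try (apply in_or_app; right; auto); auto.
  destruct H; auto.
Qed.

Definition P_eval n := forall G e St D w, is_whnf w ->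
  sa St n (G, CEval e, St) (D, CEval w, St) -> bs G (upd St) e D w.
Definition P_match n := forall G A m St D A' r, (A' = [] \/ r = RFail) ->
  sa St n (G, CMatch A m, St) (D, CMatch A' (of_result r), St) -> bsm G (upd St) A m D r.

Ltac lencontra := match goal with H : _ = _ |- _ =>
  apply (f_equal (@length cont)) in H; simpl in H; rewrite ?length_app in H; simpl in H; lia end.
Ltac popcontra := match goal with H : sa _ _ _ _ |- _ =>
  apply sa_ext in H; simpl in H; exfalso; eapply ext_pop; exact H end.

Ltac dosplit k Hr :=
  let n1 := fresh "n1" in let n2 := fresh "n2" in
  let c1 := fresh "c1" in let c2 := fresh "c2" in
  let Hp := fresh "Hp" in let E1 := fresh "E1" in let Hs12 := fresh "Hs12" in
  let E2 := fresh "E2" in let Hq := fresh "Hq" in let En := fresh "En" in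
  destruct (split_sa k _ _ _ _ Hr ltac:(exists []; reflexivity) eq_refl)
    as (n1&n2&c1&c2&Hp&E1&Hs12&E2&Hq&En);
  destruct c1 as [[? ?] ?]; destruct c2 as [[? ?] ?]; simpl in E1, E2; subst;
  inversion Hs12; subst; try lencontra.

Lemma main n : P_eval n /\ P_match n.
Proof.
  induction n as [n IH] using lt_wf_ind.
  split.
  - intros G e St D w Hw Hsa. inversion Hsa as [c Hext | n' c c' c'' Hext Hs Hr]; subst.
    + constructor; auto.
    + destruct e; inversion Hs; subst; try popcontra.
      * dosplit (KUpd x) Hr.
        match goal with H : sa St _ (_, CEval ?w1, St) _, Hw1 : is_whnf ?w1 |- _ =>
          pose proof (sa_stuck_eval _ _ _ _ _ Hw1 H) as Eq; inversion Eq; subst end.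
        apply BS_Var. change (x :: upd St) with (upd (KUpd x :: St)).
        eapply (proj1 (IH n1 ltac:(lia))); eauto.
      * dosplit (KArg y) Hr.
        eapply BS_App.
        -- change (upd St) with (upd (KArg y :: St)). eapply (proj1 (IH n1 ltac:(lia))); [|exact Hp]. simpl; eauto.
        -- eapply (proj1 (IH n2 ltac:(lia))); eauto.
      * dosplit KSat Hr.
        eapply BS_Sat; [eassumption| |].
        -- match goal with H : sa (KSat :: St) n1 _ (?H1, CMatch [] (MRet ?e1), _) |- _ =>
             change (MRet e1) with (of_result (RRet e1)) in H end.
           change (upd St) with (upd (KSat :: St)). eapply (proj2 (IH n1 ltac:(lia))); [|exact Hp]; auto.
        -- eapply (proj1 (IH n2 ltac:(lia))); eauto.
  - intros G A m St D A' r HA Hsa.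
    inversion Hsa as [c Hext | n' c c' c'' Hext Hs Hr]; subst.
    + destruct r; simpl in *.
      * destruct HA as [->|]; [|discriminate]. exact (BSM_Return _ (upd St) [] e).
      * constructor.
    + destruct m; [| |destruct p| | |]; inversion Hs; subst; try popcontra.
      *
        change (MRet (app_args A e)) with (of_result (RRet (app_args A e))) in Hr.
        pose proof (sa_stuck_match _ _ _ _ _ _ (or_introl eq_refl) Hr) as Eq.
        inversion Eq; subst. destruct r; simpl in *; try discriminate.
        match goal with H : MRet _ = MRet _ |- _ => inversion H; subst end.
        constructor.
      * apply BSM_Bind. eapply (proj2 (IH n' ltac:(lia))); eauto.
      * dosplit (KCons A0 c ps m) Hr.
        -- eapply BSM_Cons1; [eassumption| |].
           ++ change (upd St) with (upd (KCons A0 c ps m :: St)).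
              eapply (proj1 (IH n1 ltac:(lia))); [|exact Hp]; simpl; auto.
           ++ eapply (proj2 (IH n2 ltac:(lia))); eauto.
        -- change MFail with (of_result RFail) in Hq.
           pose proof (sa_stuck_match _ _ _ _ _ _ (or_introl eq_refl) Hq) as Eq.
           inversion Eq; subst. destruct r; simpl in *; try discriminate.
           eapply BSM_Cons2; [eassumption|].
           change (upd St) with (upd (KCons A0 c ps m :: St)).
           eapply (proj1 (IH n1 ltac:(lia))); [|exact Hp]; simpl; auto.
      * apply BSM_Arg. eapply (proj2 (IH n' ltac:(lia))); eauto.
      * dosplit (KAlt A m2) Hr.
        -- change (MRet ?e1) with (of_result (RRet e1)) in Hq.
           pose proof (sa_stuck_match _ _ _ _ _ _ (or_introl eq_refl) Hq) as Eq.
           inversion Eq; subst. destruct r; simpl in *; try discriminate.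
           match goal with H : MRet _ = MRet _ |- _ => inversion H; subst end.
           apply BSM_Alt1.
           change (upd St) with (upd (KAlt A m2 :: St)).
           eapply (proj2 (IH n1 ltac:(lia))); [|exact Hp]; simpl; auto.
        -- eapply BSM_Alt2.
           ++ change (upd St) with (upd (KAlt A m2 :: St)).
              change MFail with (of_result RFail) in Hp.
              eapply (proj2 (IH n1 ltac:(lia))); [|exact Hp]; simpl; auto.
           ++ eapply (proj2 (IH n2 ltac:(lia))); eauto.
      * eapply BSM_Where; eauto.
        -- intros y Hy. match goal with H : forall y, In y _ -> _ |- _ =>
             destruct (H y Hy) as (?&?&?&?) end.
           split; [assumption|]. split; [intro Hin; apply upd_vars in Hin; auto|]. split; assumption.
        -- eapply (proj2 (IH n' ltac:(lia))); eauto.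
Qed.

Theorem theorem4p5 :
  (forall (G : heap) (e : expr) (S : stack) (D : heap) (w : expr),
      finite_heap G -> is_whnf w ->
      balanced G (CEval e) S D (CEval w) ->
      bs G (upd S) e D w) /\
  (forall (G : heap) (A : list var) (m : matching) (S : stack) (D : heap) (r : result),
      finite_heap G ->
      balanced G (CMatch A m) S D (CMatch nil (of_result r)) ->
      bsm G (upd S) A m D r).
Proof.
  split.
  - intros G e St D w _ Hw Hb. destruct (to_sa _ _ _ Hb) as [n Hn].
    eapply (proj1 (main n)); eauto.
  - intros G A m St D r _ Hb. destruct (to_sa _ _ _ Hb) as [n Hn].
    eapply (proj2 (main n)); eauto.
Qed.
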